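(* Fix $n\in\mathbb N$ and positive integers $m_1,m_2$. Let $\mathbf g_{kj}(t)$, $k,j\in\{1,2\}$, $t=1,\dots,n$, be complex random variables i.i.d. with a continuous distribution, $\mathbf G^n_{kj}$ the $n\times n$ diagonal matrix with diagonal entries $\mathbf g_{kj}(1),\dots,\mathbf g_{kj}(n)$, and $\mathbf V^n_1\in\mathbb C^{n\times m_1}$, $\mathbf V^n_2\in\mathbb C^{n\times m_2}$ matrices whose $t$-th rows $\vec{\mathbf v}_1(t)^\top,\vec{\mathbf v}_2(t)^\top$ are deterministic functions of $\mathcal G^{t-1}=\{\mathbf g_{kj}(s):k,j\in\{1,2\},s\le t-1\}$. For $i\in\{1,\dots,n\}$ let $\mathcal A_i$ be the event $\mathrm{rank}[\mathbf G^{i}_{21}\mathbf V^{i}_1\ \ \mathbf G^{i}_{22}\mathbf V^{i}_2]=\mathrm{rank}[\mathbf G^{i-1}_{21}\mathbf V^{i-1}_1\ \ \mathbf G^{i-1}_{22}\mathbf V^{i-1}_2]$, and $\mathcal B_i$ the event that both $[\vec{\mathbf v}_1(i)^\top\ \vec 0_{1\times m_2}]$ and $[\vec 0_{1\times m_1}\ \vec{\mathbf v}_2(i)^\top]$ lie in $\mathrm{rowspan}[\mathbf G^{i-1}_{21}\mathbf V^{i-1}_1\ \ \mathbf G^{i-1}_{22}\mathbf V^{i-1}_2]$. Then $\Pr\big(\bigcup_{i=1}^n(\mathcal A_i\cap\mathcal B_i^c)\big)=0$.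
   Context: For $t\le n$, $\mathbf G^{t}_{kj}$ is the leading $t\times t$ principal submatrix of $\mathbf G^n_{kj}$ and $\mathbf V^{t}_j$ consists of the first $t$ rows of $\mathbf V^n_j$; for $t=0$ the matrix $[\mathbf G^0_{21}\mathbf V^0_1\ \ \mathbf G^0_{22}\mathbf V^0_2]$ is the zero row (rank 0, rowspan $\{0\}$). *)

(* Defs.v *)
From HB Require Import structures.
From mathcomp Require Import all_boot all_order all_algebra.
From mathcomp Require Import all_classical all_reals all_analysis.
From mathcomp Require Import complex.
Set Implicit Arguments. Unset Strict Implicit. Unset Printing Implicit Defensive.
Import Order.TTheory GRing.Theory Num.Theory.
Local Open Scope classical_set_scope.
Local Open Scope ring_scope.

(* Borel sigma-algebra on C = R[i] (generated by Borel sets of Re and Im,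
   i.e. the Borel sets of R^2). *)
Definition CBorel (R : realType) : set (set R[i]) :=
  <<s [set (@complex.Re R) @^-1` B | B in measurable]
      `|` [set (@complex.Im R) @^-1` B | B in measurable] >>.
Arguments CBorel R : clear implicits.

Definition preimg_sys d (T : measurableType d) (R : realType)
  (X : T -> R[i]) : set (set T) := [set X @^-1` B | B in CBorel R].

Definition c_rv d (T : measurableType d) (R : realType) (X : T -> R[i]) :=
  forall B, CBorel R B -> measurable (X @^-1` B).

Definition mutually_independent d (T : measurableType d) (R : realType)
  (P : probability T R) (I : finType) (X : I -> T -> R[i]) :=
  forall A : I -> set T, (forall i, preimg_sys (X i) (A i)) ->
    P (\bigcap_(i in [set: I]) A i) = (\prod_(i : I) P (A i))%E.

(* index conventions: k,j in {1,2} are represented by 'I_2, with 1 |-> i1, 2 |-> i2;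
   time t in {1,..,n} is represented by t-1 in {0,..,n-1}. *)
Definition i1 : 'I_2 := ord0.
Definition i2 : 'I_2 := ord_max.

Definition past_sigma d (T : measurableType d) (R : realType)
  (g : 'I_2 -> 'I_2 -> nat -> T -> R[i]) (t : nat) : set (set T) :=
  <<s [set A | exists k j s, (s < t)%N /\ preimg_sys (g k j s) A] >>.

(* Y is a (measurable) deterministic function of the g_kj(s), s < t *)
Definition past_measurable d (T : measurableType d) (R : realType)
  (g : 'I_2 -> 'I_2 -> nat -> T -> R[i]) (t : nat) (Y : T -> R[i]) :=
  forall B, CBorel R B -> past_sigma g t (Y @^-1` B).

(* [G^t_21 V^t_1  G^t_22 V^t_2] : its row s (0-indexed) is
   [g21(s) v1(s)^T , g22(s) v2(s)^T]; for t = 0 it has no rows. *)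
Definition Mat (T : Type) (R : realType) (m1 m2 : nat)
  (g : 'I_2 -> 'I_2 -> nat -> T -> R[i])
  (v1 : nat -> T -> 'rV[R[i]]_m1) (v2 : nat -> T -> 'rV[R[i]]_m2)
  (t : nat) (w : T) : 'M[R[i]]_(t, m1 + m2) :=
  \matrix_(s < t) row_mx (g i2 i1 s w *: v1 s w) (g i2 i2 s w *: v2 s w).

(* event A_{i+1} (0-indexed i) : rank does not increase at step i+1 *)
Definition Aev (T : Type) (R : realType) (m1 m2 : nat)
  (g : 'I_2 -> 'I_2 -> nat -> T -> R[i])
  (v1 : nat -> T -> 'rV[R[i]]_m1) (v2 : nat -> T -> 'rV[R[i]]_m2)
  (i : nat) : set T :=
  [set w | \rank (Mat g v1 v2 i.+1 w) = \rank (Mat g v1 v2 i w)].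

(* event B_{i+1} (0-indexed i) *)
Definition Bev (T : Type) (R : realType) (m1 m2 : nat)
  (g : 'I_2 -> 'I_2 -> nat -> T -> R[i])
  (v1 : nat -> T -> 'rV[R[i]]_m1) (v2 : nat -> T -> 'rV[R[i]]_m2)
  (i : nat) : set T :=
  [set w | (row_mx (v1 i w) 0 <= Mat g v1 v2 i w)%MS
           /\ (row_mx 0 (v2 i w) <= Mat g v1 v2 i w)%MS].

(* Main.v *)
Require Import Defs.
From HB Require Import structures.
From mathcomp Require Import all_boot all_order all_algebra.
From mathcomp Require Import all_classical all_reals all_analysis.
From mathcomp Require Import complex.
From mathcomp Require Import measurable_realfun.
From mathcomp Require Import ring.
Set Implicit Arguments. Unset Strict Implicit. Unset Printing Implicit Defensive.
Import Order.TTheory GRing.Theory Num.Theory.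
Local Open Scope classical_set_scope.
Local Open Scope ring_scope.

Section LA.
Variable F : fieldType.

Lemma rank_colsub_le t m r (X : 'M[F]_(t,m)) (h : 'I_r -> 'I_m) :
  (\rank (colsub h X) <= \rank X)%N.
Proof.
have -> : colsub h X = X *m colsub h 1%:M by rewrite mulmx_colsub mulmx1.
exact: mxrankM_maxl.
Qed.

Lemma rank_mxsub_le t m r s (M : 'M[F]_(t,m)) (f : 'I_r -> 'I_t) (h : 'I_s -> 'I_m) :
  (\rank (mxsub f h M) <= \rank M)%N.
Proof.
rewrite mxsubcr; apply: leq_trans (rank_colsub_le _ _) _.
exact: mxrankS (rowsub_sub f M).
Qed.

Lemma minor_le t m r (M : 'M[F]_(t,m)) (f : 'I_r -> 'I_t) (h : 'I_r -> 'I_m) :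
  \det (mxsub f h M) != 0 -> (r <= \rank M)%N.
Proof.
move=> d; have u : mxsub f h M \in unitmx by rewrite unitmxE unitfE.
by rewrite -{1}(mxrank_unit u); exact: rank_mxsub_le.
Qed.

Lemma minor_exists t m (M : 'M[F]_(t,m)) :
  exists f : 'I_(\rank M) -> 'I_t, exists h : 'I_(\rank M) -> 'I_m,
    \det (mxsub f h M) != 0.
Proof.
pose f := maxrankfun M.
have fB : row_free (rowsub f M) := maxrowsub_free M.
have fT : row_full (rowsub f M)^T by rewrite /row_full mxrank_tr; exact: fB.
exists f, (fullrankfun fT).
have := fullrowsub_unit fT; rewrite unitmxE unitfE.
suff -> : mxsub f (fullrankfun fT) M = (rowsub (fullrankfun fT) (rowsub f M)^T)^T.
  by rewrite det_tr.
by apply/matrixP => i j; rewrite !mxE.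
Qed.

Definition beta t m r (W : 'M[F]_(t,m)) (f : 'I_r -> 'I_t) (h : 'I_r -> 'I_m)
  (y : 'rV[F]_m) (k : 'I_m) : F :=
  \det (mxsub f h W) * y 0 k - (colsub h y *m \adj (mxsub f h W) *m col k (rowsub f W)) 0 0.

Lemma beta_lin t m r (W : 'M[F]_(t,m)) (f : 'I_r -> 'I_t) (h : 'I_r -> 'I_m)
  (a b : F) (y1 y2 : 'rV[F]_m) k :
  beta W f h (a *: y1 + b *: y2) k = a * beta W f h y1 k + b * beta W f h y2 k.
Proof.
rewrite /beta.
have -> : colsub h (a *: y1 + b *: y2) = a *: colsub h y1 + b *: colsub h y2.
  by apply/matrixP => i j; rewrite !mxE.
rewrite !mulmxDl -!scalemxAl !mxE.
ring.
Qed.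

Lemma beta_spec t m (W : 'M[F]_(t,m)) (f : 'I_(\rank W) -> 'I_t)
  (h : 'I_(\rank W) -> 'I_m) (y : 'rV[F]_m) :
  \det (mxsub f h W) != 0 -> (y <= W)%MS <-> (forall k, beta W f h y k = 0).
Proof.
set A := mxsub f h W; set Wf := rowsub f W => dA.
have uA : A \in unitmx by rewrite unitmxE unitfE.
have betaE k : beta W f h y k = \det A * (y - colsub h y *m invmx A *m Wf) 0 k.
  rewrite /beta -/A -/Wf /invmx uA.
  rewrite [in RHS]mxE [X in y 0 k + X]mxE mulrDr mulrN; congr (_ - _).
  rewrite -scalemxAr -scalemxAl [in RHS]mxE mulrA mulfV // mul1r.
  by rewrite !mxE; apply: eq_bigr => j _; rewrite !mxE.
have AE : A = colsub h Wf by rewrite /A mxsubcr.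
have WWf : (W <= Wf)%MS.
  have := mxrank_leqif_sup (rowsub_sub f W); rewrite -/Wf => /leqifP.
  case: ifP => // _ lt; exfalso; move: lt; rewrite ltnNge.
  by rewrite (leq_trans _ (rank_colsub_le Wf h)) // -AE mxrank_unit.
have key : (y <= W)%MS <-> y = colsub h y *m invmx A *m Wf.
  split.
    move=> yW; have /submxP[c ->] := submx_trans yW WWf.
    by rewrite -mulmx_colsub -AE mulmxK.
  move=> ->; apply: submx_trans (submxMl _ _) _; exact: rowsub_sub.
rewrite key; split.
  move=> yE k; rewrite betaE -yE subrr mxE.
  by rewrite mulr0.
move=> H; apply/eqP; rewrite -subr_eq0; apply/eqP/matrixP => i k.
rewrite ord1; have := H k; rewrite betaE => /eqP.
by rewrite mulf_eq0 (negbTE dA) /= => /eqP ->; rewrite mxE.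
Qed.
End LA.

Section CM.
Context (R : realType).
Local Notation Re := (@complex.Re R).
Local Notation Im := (@complex.Im R).

Lemma cReD (x y : R[i]) : Re (x + y) = Re x + Re y. Proof. by case: x => a b; case: y => c e. Qed.
Lemma cImD (x y : R[i]) : Im (x + y) = Im x + Im y. Proof. by case: x => a b; case: y => c e. Qed.
Lemma cReM (x y : R[i]) : Re (x * y) = Re x * Re y - Im x * Im y.
Proof. by case: x => a b; case: y => c e. Qed.
Lemma cImM (x y : R[i]) : Im (x * y) = Re x * Im y + Im x * Re y.
Proof. by case: x => a b; case: y => c e /=; rewrite addrC. Qed.
Lemma cReN (x : R[i]) : Re (- x) = - Re x. Proof. by case: x. Qed.
Lemma cImN (x : R[i]) : Im (- x) = - Im x. Proof. by case: x. Qed.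

Definition cm d (T : measurableType d) (f : T -> R[i]) :=
  forall B, CBorel R B -> measurable (f @^-1` B).

Lemma CBorelRe (B : set R) : measurable B -> CBorel R (Re @^-1` B).
Proof. by move=> mB; apply: sub_gen_smallest; left; exists B. Qed.
Lemma CBorelIm (B : set R) : measurable B -> CBorel R (Im @^-1` B).
Proof. by move=> mB; apply: sub_gen_smallest; right; exists B. Qed.

Lemma cmP d (T : measurableType d) (f : T -> R[i]) :
  cm f <-> measurable_fun setT (fun x => Re (f x)) /\ measurable_fun setT (fun x => Im (f x)).
Proof.
split.
  move=> cf; split=> _ B mB; rewrite setTI.
    exact: (cf _ (CBorelRe mB)).
  exact: (cf _ (CBorelIm mB)).
move=> [mr mi] B; apply: (@smallest_sub _ _ _ [set B | measurable (f @^-1` B)]) B.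
  split.
  - by rewrite /= preimage_set0.
  - by move=> A /= mA; rewrite setTD preimage_setC; apply: measurableC.
  - by move=> F mF; rewrite /= preimage_bigcup; exact: bigcupT_measurable.
move=> A [[B mB <-]|[B mB <-]].
  by have := mr measurableT _ mB; rewrite setTI.
by have := mi measurableT _ mB; rewrite setTI.
Qed.

Section closure.
Context d (T : measurableType d).
Implicit Types f g : T -> R[i].

Lemma cm_cst (c : R[i]) : cm (fun _ : T => c).
Proof. by apply/cmP; split; exact: measurable_cst. Qed.

Lemma cm_add f g : cm f -> cm g -> cm (fun x => f x + g x).
Proof.
move=> /cmP[fr fi] /cmP[gr gi]; apply/cmP; split.
  rewrite (_ : (fun x => _) = (fun x => Re (f x)) \+ (fun x => Re (g x))).
    exact: measurable_funD.
  by apply/funext => x; rewrite /= cReD.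
rewrite (_ : (fun x => _) = (fun x => Im (f x)) \+ (fun x => Im (g x))).
  exact: measurable_funD.
by apply/funext => x; rewrite /= cImD.
Qed.

Lemma cm_opp f : cm f -> cm (fun x => - f x).
Proof.
move=> /cmP[fr fi]; apply/cmP; split.
  rewrite (_ : (fun x => _) = \- (fun x => Re (f x))).
    exact: measurable_funN.
  by apply/funext => x; rewrite /= cReN.
rewrite (_ : (fun x => _) = \- (fun x => Im (f x))).
  exact: measurable_funN.
by apply/funext => x; rewrite /= cImN.
Qed.

Lemma cm_mul f g : cm f -> cm g -> cm (fun x => f x * g x).
Proof.
move=> /cmP[fr fi] /cmP[gr gi]; apply/cmP; split.
  rewrite (_ : (fun x => _) = ((fun x => Re (f x)) \* (fun x => Re (g x))) \-
     ((fun x => Im (f x)) \* (fun x => Im (g x)))).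
    by apply: measurable_funB; exact: measurable_funM.
  by apply/funext => x; rewrite /= cReM.
rewrite (_ : (fun x => _) = ((fun x => Re (f x)) \* (fun x => Im (g x))) \+
     ((fun x => Im (f x)) \* (fun x => Re (g x)))).
  by apply: measurable_funD; exact: measurable_funM.
by apply/funext => x; rewrite /= cImM.
Qed.

Lemma cm_sub f g : cm f -> cm g -> cm (fun x => f x - g x).
Proof. by move=> cf cg; apply: cm_add => //; exact: cm_opp. Qed.

Lemma cm_sum (I : Type) (r : seq I) (P : pred I) (F : I -> T -> R[i]) :
  (forall i, P i -> cm (F i)) -> cm (fun x => \sum_(i <- r | P i) F i x).
Proof.
move=> cF; elim: r => [|a r IH].
  by under eq_fun do rewrite big_nil; exact: cm_cst.
have [Pa|Pa] := boolP (P a).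
  under eq_fun do rewrite big_cons Pa.
  by apply: cm_add => //; exact: cF.
by under eq_fun do rewrite big_cons (negbTE Pa).
Qed.

Lemma cm_prod (I : Type) (r : seq I) (P : pred I) (F : I -> T -> R[i]) :
  (forall i, P i -> cm (F i)) -> cm (fun x => \prod_(i <- r | P i) F i x).
Proof.
move=> cF; elim: r => [|a r IH].
  by under eq_fun do rewrite big_nil; exact: cm_cst.
have [Pa|Pa] := boolP (P a).
  under eq_fun do rewrite big_cons Pa.
  by apply: cm_mul => //; exact: cF.
by under eq_fun do rewrite big_cons (negbTE Pa).
Qed.


Lemma cm_eq f (c : R[i]) : cm f -> measurable [set x | f x = c].
Proof.
move=> /cmP[fr fi].
have -> : [set x | f x = c] =
  ((fun x => Re (f x)) @^-1` [set Re c]) `&` ((fun x => Im (f x)) @^-1` [set Im c]).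
  apply/seteqP; split => x /=; first by move=> ->.
  by case: c => a b; case: (f x) => a' b' /= [-> ->].
apply: measurableI.
  by have := fr measurableT _ (measurable_set1 (Re c)); rewrite setTI.
by have := fi measurableT _ (measurable_set1 (Im c)); rewrite setTI.
Qed.

Lemma cm_neq f (c : R[i]) : cm f -> measurable [set x | f x != c].
Proof.
move=> cf; have -> : [set x | f x != c] = ~` [set x | f x = c].
  by apply/seteqP; split => x /= /eqP.
exact/measurableC/cm_eq.
Qed.

Definition mcm p q (M : T -> 'M[R[i]]_(p, q)) := forall i j, cm (fun x => M x i j).

Lemma mcm_mxsub p q p' q' (M : T -> 'M[R[i]]_(p, q)) (f : 'I_p' -> 'I_p) (g : 'I_q' -> 'I_q) :
  mcm M -> mcm (fun x => mxsub f g (M x)).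
Proof. by move=> cM i j; under eq_fun do rewrite mxE; exact: cM. Qed.

Lemma mcm_mul p q r (A : T -> 'M[R[i]]_(p, q)) (B : T -> 'M[R[i]]_(q, r)) :
  mcm A -> mcm B -> mcm (fun x => A x *m B x).
Proof.
move=> cA cB i j; under eq_fun do rewrite mxE.
by apply: cm_sum => k _; exact: cm_mul.
Qed.

Lemma cm_det n (A : T -> 'M[R[i]]_n) : mcm A -> cm (fun x => \det (A x)).
Proof.
move=> cA; rewrite /determinant; apply: cm_sum => s _.
apply: cm_mul; first exact: cm_cst.
by apply: cm_prod => k _; exact: cA.
Qed.

Lemma mcm_adj n (A : T -> 'M[R[i]]_n) : mcm A -> mcm (fun x => \adj (A x)).
Proof.
move=> cA i j; under eq_fun do rewrite mxE /cofactor.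
apply: cm_mul; first exact: cm_cst.
by apply: cm_det => k l; under eq_fun do rewrite !mxE; exact: cA.
Qed.

Lemma cm_beta t m r (W : T -> 'M[R[i]]_(t, m)) (y : T -> 'rV[R[i]]_m)
  (f : 'I_r -> 'I_t) (h : 'I_r -> 'I_m) k :
  mcm W -> mcm y -> cm (fun x => beta (W x) f h (y x) k).
Proof.
move=> cW cy; rewrite /beta; apply: cm_sub.
  by apply: cm_mul; [apply: cm_det; exact: mcm_mxsub|exact: cy].
apply: mcm_mul; first apply: mcm_mul.
- exact: mcm_mxsub.
- by apply: mcm_adj; exact: mcm_mxsub.
- by apply: mcm_mxsub; exact: mcm_mxsub.
Qed.

Definition minor_ev t m s (M : T -> 'M[R[i]]_(t, m)) : set T :=
  \bigcup_(fh in [set: {ffun 'I_s -> 'I_t} * {ffun 'I_s -> 'I_m}])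
     [set x | \det (mxsub fh.1 fh.2 (M x)) != 0].

Lemma minor_ev_meas t m s (M : T -> 'M[R[i]]_(t, m)) : mcm M -> measurable (minor_ev s M).
Proof.
move=> cM; apply: fin_bigcup_measurable; first exact: finite_finset.
move=> fh _; apply: cm_neq.
by apply: cm_det; exact: mcm_mxsub.
Qed.

Lemma minor_evP t m s (M : T -> 'M[R[i]]_(t, m)) x :
  minor_ev s M x <-> exists (f : 'I_s -> 'I_t) (h : 'I_s -> 'I_m), \det (mxsub f h (M x)) != 0.
Proof.
split; first by move=> [[f h] _ /= dt]; exists f, h.
move=> [f [h dt]]; exists (finfun f, finfun h) => //=.
by rewrite mxsub_ffun.
Qed.

Lemma rank_ev_meas t m (M : T -> 'M[R[i]]_(t, m)) r :
  mcm M -> measurable [set x | \rank (M x) = r].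
Proof.
move=> cM.
have -> : [set x | \rank (M x) = r] = minor_ev r M `&`
    \bigcap_(s in [set s | (r < s <= t)%N]) ~` minor_ev s M.
  apply/seteqP; split => x /=.
    move=> rE; split.
      by apply/minor_evP; rewrite -rE; exact: minor_exists.
    move=> s /andP[rs st] /minor_evP[f [h /minor_le]].
    by rewrite rE leqNgt rs.
  move=> [/minor_evP[f [h /minor_le rle]] H].
  apply/eqP; rewrite eqn_leq rle andbT leqNgt; apply/negP => lt.
  apply: (H (\rank (M x))); first by rewrite /= lt rank_leq_row.
  by apply/minor_evP; exact: minor_exists.
apply: measurableI; first exact: minor_ev_meas.
apply: bigcap_measurableType => s _; apply: measurableC; exact: minor_ev_meas.
Qed.

Lemma rank_eq_meas t1 t2 m (M1 : T -> 'M[R[i]]_(t1, m)) (M2 : T -> 'M[R[i]]_(t2, m)) :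
  mcm M1 -> mcm M2 -> measurable [set x | \rank (M1 x) = \rank (M2 x)].
Proof.
move=> c1 c2.
have -> : [set x | \rank (M1 x) = \rank (M2 x)] =
  \bigcup_(r in [set r | (r <= t1)%N]) ([set x | \rank (M1 x) = r] `&` [set x | \rank (M2 x) = r]).
  apply/seteqP; split => x /=.
    by move=> e; exists (\rank (M1 x)); rewrite /= ?rank_leq_row.
  by move=> [r _ [-> ->]].
apply: bigcup_measurable => r _; apply: measurableI; exact: rank_ev_meas.
Qed.

End closure.
End CM.

HB.instance Definition _ (R : realType) := isPointed.Build (complex R) 0.
Definition CGEN (R : realType) : set (set R[i]) :=
  [set (@complex.Re R) @^-1` B | B in measurable]
  `|` [set (@complex.Im R) @^-1` B | B in measurable].
Arguments CGEN R : clear implicits.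
Definition CTy (R : realType) := g_sigma_algebraType (CGEN R).

Section P3.
Context (R : realType).
Local Notation Re := (@complex.Re R).
Local Notation Im := (@complex.Im R).
Local Notation CT := (CTy R).

Lemma CBorel_set1 (c : R[i]) : CBorel R [set c].
Proof.
have -> : [set c] = (Re @^-1` [set Re c]) `&` (Im @^-1` [set Im c]).
  apply/seteqP; split => x /=; first by move=> ->.
  by case: c => a b; case: x => a' b' /= [-> ->].
apply: (@measurableI _ CT).
  by apply: sub_gen_smallest; left; exists [set Re c] => //; exact: measurable_set1.
by apply: sub_gen_smallest; right; exists [set Im c] => //; exact: measurable_set1.
Qed.

Context d (T : measurableType d) (P : probability T R).

Lemma null_lin (G1 : set (set T)) (X U V : T -> R[i]) :
  G1 `<=` measurable -> cm X ->
  (forall A B, <<s G1 >> A -> CBorel R B -> P (A `&` X @^-1` B) = (P A * P (X @^-1` B))%E) ->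
  (forall c, P (X @^-1` [set c]) = 0%E) ->
  cm (U : g_sigma_algebraType G1 -> R[i]) -> cm (V : g_sigma_algebraType G1 -> R[i]) ->
  measurable [set x | X x * U x + V x = 0 /\ U x != 0] /\
  P [set x | X x * U x + V x = 0 /\ U x != 0] = 0%E.
Proof.
move=> G1m cX indep atom cU cV.
pose T1 := g_sigma_algebraType G1.
have sG : <<s G1 >> `<=` @measurable _ T.
  by apply: smallest_sub => //; exact: sigma_algebra_measurable.
have mid : measurable_fun setT (id : T -> T1).
  by move=> _ A mA; rewrite setTI; exact: sG.
have mX : measurable_fun setT (X : T -> CT).
  by move=> _ B mB; rewrite setTI; exact: cX.
have mdiag : measurable_fun setT (fun x : T => ((x : T1), (X x : CT))).
  exact: measurable_fun_pair.
pose f1 := mfun_Sub (mem_set mid).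
pose f2 := mfun_Sub (mem_set mX).
pose f12 := mfun_Sub (mem_set mdiag).
pose m1 := distribution P f1.
pose m2 := distribution P f2.
pose m' := distribution P f12.
have rect : forall A B, measurable A -> measurable B -> m' (A `*` B) = (m1 A * m2 B)%E.
  by move=> A B mA mB; rewrite /m' /m1 /m2 /distribution /pushforward /= indep.
pose S : set (T1 * CT) := [set p | p.2 * U p.1 + V p.1 = 0 /\ U p.1 != 0].
have cfst (W : T1 -> R[i]) : cm W -> cm (fun p : T1 * CT => W p.1).
  move=> cW B mB; have -> : (fun p : T1 * CT => W p.1) @^-1` B = (W @^-1` B) `*` setT.
    by apply/seteqP; split => -[x y] /=; move=> // [].
  by apply: measurableX => //; exact: cW.
have csnd : cm (fun p : T1 * CT => p.2).
  move=> B mB; have -> : (fun p : T1 * CT => p.2) @^-1` B = setT `*` B.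
    by apply/seteqP; split => -[x y] /=; move=> // [].
  exact: measurableX.
have mS : measurable S.
  have -> : S = [set p | p.2 * U p.1 + V p.1 = 0] `&` [set p | U p.1 != 0] by [].
  apply: measurableI.
    by apply: cm_eq; apply: cm_add; [apply: cm_mul => //; exact: cfst|exact: cfst].
  by apply: cm_neq; exact: cfst.
have mE := mdiag measurableT S mS; rewrite setTI in mE.
split; first exact: mE.
have -> : P [set x | X x * U x + V x = 0 /\ U x != 0] = (m1 \x m2)%E S.
  by rewrite (product_measure_unique rect mS).
rewrite /product_measure1; apply: integral0_eq => x _ /=.
have [U0|U0] := eqVneq (U x) 0.
  have -> : xsection S x = set0.
    by apply/seteqP; split => z //=; rewrite /xsection /= inE /S /= U0 eqxx => -[].
  exact: (measure0 (distribution P f2)).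
have -> : xsection S x = [set - V x / U x].
  apply/seteqP; split => z; rewrite /xsection /= inE /S /=.
    by move=> [/eqP + _]; rewrite addr_eq0 => /eqP <-; rewrite mulfK.
  move=> ->; split => //.
  by rewrite divfK // addNr.
exact: atom.
Qed.
End P3.

Section Indep.
Context (R : realType) d (T : measurableType d) (P : probability T R).
Context (Ix : finType) (Xf : Ix -> T -> R[i]).

Definition Pi (q : Ix) : set (set T) :=
  [set A | exists B : Ix -> set R[i], (forall p, CBorel R (B p)) /\ B q = setT /\
     A = \bigcap_(p in [set: Ix]) (Xf p @^-1` B p)].

Lemma CBorelT : CBorel R setT.
Proof. exact: (@measurableT _ (CTy R)). Qed.

Lemma CBorelI A B : CBorel R A -> CBorel R B -> CBorel R (A `&` B).
Proof. exact: (@measurableI _ (CTy R)). Qed.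

Lemma Pi_meas q : (forall p, cm (Xf p)) -> Pi q `<=` measurable.
Proof.
move=> cX _ [B [cB [_ ->]]]; apply: fin_bigcap_measurable; first exact: finite_finset.
by move=> p _; exact: cX.
Qed.

Lemma Pi_gen q p B : p != q -> CBorel R B -> Pi q (Xf p @^-1` B).
Proof.
move=> pq cB; exists (fun p' => if p' == p then B else setT); split.
  by move=> p'; case: ifP => // _; exact: CBorelT.
split; first by rewrite eq_sym (negbTE pq).
apply/seteqP; split => x /=.
  by move=> Bx p' _; case: ifP => // /eqP ->.
by move=> /(_ p I); rewrite eqxx.
Qed.

Lemma Pi_setI q : setI_closed (Pi q).
Proof.
move=> _ _ [B [cB [Bq ->]]] [B' [cB' [Bq' ->]]].
exists (fun p => B p `&` B' p); split; first by move=> p; exact: CBorelI.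
split; first by rewrite Bq Bq' setIT.
by apply/seteqP; split => x /=; [move=> [h1 h2] p _; split; [exact: h1|exact: h2]|
  move=> h; split => p _; have [] := h p I].
Qed.

Lemma indep_Pi q B : (forall p, cm (Xf p)) -> mutually_independent P Xf -> CBorel R B ->
  forall A, Pi q A -> P (A `&` Xf q @^-1` B) = (P A * P (Xf q @^-1` B))%E.
Proof.
move=> cX mi cB _ [C [cC [Cq ->]]].
pose C' := fun p => if p == q then B else C p.
have -> : \bigcap_(p in [set: Ix]) Xf p @^-1` C p `&` Xf q @^-1` B =
    \bigcap_(p in [set: Ix]) Xf p @^-1` C' p.
  apply/seteqP; split => x /=.
    by move=> [h1 h2] p _; rewrite /C'; case: ifP => [/eqP ->|_] //; exact: h1.
  move=> h; split; last by have := h q I; rewrite /C' eqxx.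
  move=> p _; have := h p I; rewrite /C'; case: ifP => [/eqP ->|//].
  by rewrite Cq.
have h1 : forall p, preimg_sys (Xf p) (Xf p @^-1` C' p).
  by move=> p; exists (C' p) => //; rewrite /C'; case: ifP.
have h2 : forall p, preimg_sys (Xf p) (Xf p @^-1` C p) by move=> p; exists (C p).
rewrite (mi _ h1) (mi _ h2).
rewrite (bigD1 q) //= [in RHS](bigD1 q) //= /C' eqxx Cq preimage_setT probability_setT mul1e.
rewrite muleC; congr (_ * _)%E; apply: eq_bigr => p /negbTE ->.
by [].
Qed.

Lemma indep_gen q B : (forall p, cm (Xf p)) -> mutually_independent P Xf -> CBorel R B ->
  forall A, <<s Pi q >> A -> P (A `&` Xf q @^-1` B) = (P A * P (Xf q @^-1` B))%E.
Proof.
move=> cX mi cB.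
have sG : <<s Pi q >> `<=` @measurable _ T.
  by apply: smallest_sub; [exact: sigma_algebra_measurable|exact: Pi_meas].
have mY : measurable (Xf q @^-1` B) by exact: cX.
apply: (@dynkin_induction _ (g_sigma_algebraType (Pi q)) (Pi q)) => //.
- exact: Pi_setI.
- by rewrite /= setTI probability_setT mul1e.
- exact: indep_Pi.
- move=> S mS hS /=.
  have mS' : @measurable _ T S := sG _ mS.
  have -> : ~` S `&` Xf q @^-1` B = (Xf q @^-1` B) `\` (Xf q @^-1` B `&` S).
    by apply/seteqP; split => x /=; [move=> [h1 h2]; split => // -[]|move=> [h1 h2]; split => // /(conj h1)].
  have mYS : @measurable _ T (Xf q @^-1` B `&` S) by exact: measurableI.
  have Yoo : (P (Xf q @^-1` B) < +oo)%E by rewrite ltey_eq fin_num_measure.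
  rewrite (measureD mY mYS Yoo).
  rewrite setIA setIid setIC [X in (_ - X)%E](_ : _ = (P S * P (Xf q @^-1` B))%E); last exact: hS.
  rewrite probability_setC //.
  transitivity ((1 - P S) * P (Xf q @^-1` B))%E; last first.
    by congr (_ * _)%E; apply/esym; exact: (@probability_setC _ _ _ P S mS').
  have [y ey] : exists y : R, P (Xf q @^-1` B) = y%:E.
    by exists (fine (P (Xf q @^-1` B))); rewrite fineK // fin_num_measure.
  have [s es] : exists s : R, P S = s%:E.
    by exists (fine (P S)); rewrite fineK // (fin_num_measure P _ mS').
  rewrite !ey !es [X in (X - _)%E](_ : _ = y%:E); last exact: ey.
  by rewrite -!EFinM -EFinB; congr (_%:E); ring.
- move=> F mF tF hF.
  have mF' n : @measurable _ T (F n) := sG _ (mF n).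
  rewrite setI_bigcupl measure_bigcup //=; last 2 first.
  + by move=> k _; apply: measurableI.
  + by apply: trivIset_setIr.
  have mF2 : forall k, [set: nat] k -> @measurable _ T (F k) by move=> k _.
  rewrite (measure_bigcup P _ _ mF2 tF).
  have [y ey] : exists y : R, P (Xf q @^-1` B) = y%:E.
    by exists (fine (P (Xf q @^-1` B))); rewrite fineK // fin_num_measure.
  transitivity (\sum_(0 <= k <oo | k \in [set: nat]) (y%:E * P (F k)))%E.
    by apply: eq_eseriesr => k _; rewrite -ey muleC; exact: hF.
  rewrite nneseriesZl // ey muleC; reflexivity.
Qed.
End Indep.

Section Helpers.
Context (R : realType).

Lemma submx_rank (F : fieldType) t m (W : 'M[F]_(t, m)) (u : 'rV[F]_m) :
  (u <= W)%MS <-> \rank (col_mx W u) = \rank W.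
Proof.
have WC : (W <= col_mx W u)%MS by rewrite -addsmxE addsmxSl.
have E := (mxrank_leqif_sup WC).2; rewrite col_mx_sub submx_refl /= in E.
split => [uW|e]; first by apply/esym/eqP; rewrite E.
by rewrite -E e.
Qed.

Lemma in_bigU (T : Type) (I : eqType) (s : seq I) (F : I -> set T) i x :
  i \in s -> F i x -> (\big[setU/set0]_(j <- s) F j) x.
Proof.
elim: s => // a s IH; rewrite inE big_cons => /orP[/eqP <- Fx|/IH h Fx].
  by left.
by right; exact: h.
Qed.

Lemma negl_bigU d (T : measurableType d) (mu : {measure set T -> \bar R})
  (I : eqType) (s : seq I) (F : I -> set T) :
  (forall i, i \in s -> mu.-negligible (F i)) -> mu.-negligible (\big[setU/set0]_(j <- s) F j).
Proof.
elim: s => [|a s IH] h; first by rewrite big_nil; exact: negligible_set0.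
rewrite big_cons; apply: negligibleU; first by apply: h; rewrite inE eqxx.
by apply: IH => j js; apply: h; rewrite inE js orbT.
Qed.

Context d (T' : measurableType d) (m1 m2 : nat).

Lemma mcm_Mat (g : 'I_2 -> 'I_2 -> nat -> T' -> R[i])
  (v1 : nat -> T' -> 'rV[R[i]]_m1) (v2 : nat -> T' -> 'rV[R[i]]_m2) t :
  (forall k j s, (s < t)%N -> cm (g k j s)) ->
  (forall s a, (s < t)%N -> cm (fun w => v1 s w 0 a)) ->
  (forall s a, (s < t)%N -> cm (fun w => v2 s w 0 a)) ->
  mcm (Mat g v1 v2 t).
Proof.
move=> cg c1 c2 s c; rewrite /Mat.
under eq_fun do rewrite mxE.
have st := ltn_ord s.
rewrite -(fintype.splitK c); case: (fintype.split c) => j /=.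
  under eq_fun do rewrite row_mxEl mxE.
  by apply: cm_mul; [exact: cg|exact: c1].
under eq_fun do rewrite row_mxEr mxE.
by apply: cm_mul; [exact: cg|exact: c2].
Qed.

Lemma mcm_u1 (v : T' -> 'rV[R[i]]_m1) : (forall a, cm (fun w => v w 0 a)) ->
  mcm (fun w => row_mx (v w) (0 : 'rV[R[i]]_m2)).
Proof.
move=> cv i c; rewrite ord1; rewrite -(fintype.splitK c); case: (fintype.split c) => j /=.
  by under eq_fun do rewrite row_mxEl; exact: cv.
under eq_fun do rewrite row_mxEr mxE; exact: cm_cst.
Qed.

Lemma mcm_u2 (v : T' -> 'rV[R[i]]_m2) : (forall a, cm (fun w => v w 0 a)) ->
  mcm (fun w => row_mx (0 : 'rV[R[i]]_m1) (v w)).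
Proof.
move=> cv i c; rewrite ord1; rewrite -(fintype.splitK c); case: (fintype.split c) => j /=.
  under eq_fun do rewrite row_mxEl mxE; exact: cm_cst.
by under eq_fun do rewrite row_mxEr; exact: cv.
Qed.

Lemma mcm_col_mx t m (W : T' -> 'M[R[i]]_(t, m)) (u : T' -> 'rV[R[i]]_m) :
  mcm W -> mcm u -> mcm (fun w => col_mx (W w) (u w)).
Proof.
move=> cW cu i c; rewrite -(fintype.splitK i); case: (fintype.split i) => j /=.
  by under eq_fun do rewrite col_mxEu; exact: cW.
by under eq_fun do rewrite col_mxEd; rewrite ord1; exact: cu.
Qed.

End Helpers.

Unset Implicit Arguments.
Theorem lemma6 (d : measure_display) (T : measurableType d) (R : realType)
  (P : probability T R) (n m1 m2 : nat) (m1_gt0 : (0 < m1)%N) (m2_gt0 : (0 < m2)%N)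
  (g : 'I_2 -> 'I_2 -> nat -> T -> R[i])
  (v1 : nat -> T -> 'rV[R[i]]_m1) (v2 : nat -> T -> 'rV[R[i]]_m2) :
  (forall k j s, (s < n)%N -> c_rv (g k j s)) ->
  mutually_independent P (fun p : 'I_2 * 'I_2 * 'I_n => g p.1.1 p.1.2 p.2) ->
  (forall k j s k' j' s', (s < n)%N -> (s' < n)%N ->
     forall B, CBorel R B -> P (g k j s @^-1` B) = P (g k' j' s' @^-1` B)) ->
  (forall k j s, (s < n)%N -> forall c : R[i], P (g k j s @^-1` [set c]) = 0%E) ->
  (forall s (a : 'I_m1), (s < n)%N -> past_measurable g s (fun w => v1 s w 0 a)) ->
  (forall s (a : 'I_m2), (s < n)%N -> past_measurable g s (fun w => v2 s w 0 a)) ->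
  P (\bigcup_(i in [set i | (i < n)%N])
       (Aev g v1 v2 i `&` ~` Bev g v1 v2 i)) = 0%E.
Proof.
move=> crv mi _ atom pv1 pv2.
pose Xf := fun p : 'I_2 * 'I_2 * 'I_n => g p.1.1 p.1.2 p.2.
have cX : forall p, cm (Xf p) by move=> p; exact: (crv _ _ _ (ltn_ord p.2)).
have pastT : forall s, (s <= n)%N -> past_sigma g s `<=` measurable.
  move=> s sn; apply: smallest_sub; first exact: sigma_algebra_measurable.
  move=> A [k [j [s' [s's [B cB <-]]]]].
  exact: (crv k j s' (leq_trans s's sn) B cB).
have otherQ : forall (q : 'I_2 * 'I_2 * 'I_n) (k j : 'I_2) s (sn : (s < n)%N),
    (k, j, Ordinal sn) != q -> forall B, CBorel R B -> <<s Pi Xf q >> (g k j s @^-1` B).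
  move=> q k j s sn ne B cB; apply: sub_gen_smallest.
  exact: (Pi_gen Xf ne cB).
have pastQ : forall (q : 'I_2 * 'I_2 * 'I_n) s, (s <= q.2)%N -> past_sigma g s `<=` <<s Pi Xf q >>.
  move=> q s sq; apply: smallest_sub; first exact: smallest_sigma_algebra.
  move=> A [k [j [s' [s's [B cB <-]]]]].
  have s'n : (s' < n)%N by apply: leq_trans s's (leq_trans sq (ltnW (ltn_ord q.2))).
  apply: (otherQ q k j s' s'n) => //; apply/eqP => e.
  have : s' = q.2 by rewrite -e.
  by move=> es; move: s's; rewrite es ltnNge sq.
have cT : forall t, (t <= n)%N -> @mcm R _ T _ _ (Mat g v1 v2 t).
  move=> t tn; apply: mcm_Mat.
  - by move=> k j s st; apply: crv; exact: leq_trans st tn.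
  - move=> s a st B cB; apply: (pastT s (ltnW (leq_trans st tn))).
    by apply: pv1 => //; exact: leq_trans st tn.
  - move=> s a st B cB; apply: (pastT s (ltnW (leq_trans st tn))).
    by apply: pv2 => //; exact: leq_trans st tn.
suff H : forall i, (i < n)%N ->
    measurable (Aev g v1 v2 i `&` ~` Bev g v1 v2 i) /\ P.-negligible (Aev g v1 v2 i `&` ~` Bev g v1 v2 i).
  have mU : measurable (\bigcup_(i in [set i | (i < n)%N]) (Aev g v1 v2 i `&` ~` Bev g v1 v2 i)).
    by apply: bigcup_measurable => k kn; case: (H k kn).
  apply/negligibleP => //.
  apply: (@negligibleS _ _ _ _ (\big[setU/set0]_(k <- iota 0 n) (Aev g v1 v2 k `&` ~` Bev g v1 v2 k))).
    move=> x [k /= kn Ex]; apply: (@in_bigU _ _ _ _ k) => //.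
    by rewrite mem_iota add0n kn.
  apply: negl_bigU => k; rewrite mem_iota add0n => kn.
  by case: (H k kn).
move=> i lin.
pose u1 := fun w => row_mx (v1 i w) (0 : 'rV[R[i]]_m2).
pose u2 := fun w => row_mx (0 : 'rV[R[i]]_m1) (v2 i w).
have cu1T : @mcm R _ T _ _ u1.
  apply: mcm_u1 => a B cB; apply: (pastT i (ltnW lin)); exact: pv1.
have cu2T : @mcm R _ T _ _ u2.
  apply: mcm_u2 => a B cB; apply: (pastT i (ltnW lin)); exact: pv2.
have cWT := cT i (ltnW lin).
split.
  apply: measurableI; first exact: rank_eq_meas (cT i.+1 lin) cWT.
  apply: measurableC.
  have -> : Bev g v1 v2 i =
      [set w | \rank (col_mx (Mat g v1 v2 i w) (u1 w)) = \rank (Mat g v1 v2 i w)] `&`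
      [set w | \rank (col_mx (Mat g v1 v2 i w) (u2 w)) = \rank (Mat g v1 v2 i w)].
    by apply/seteqP; split => w /= [h1 h2]; split; apply/submx_rank.
  apply: measurableI; apply: rank_eq_meas => //; exact: mcm_col_mx.
pose qa : 'I_2 * 'I_2 * 'I_n := (i2, i1, Ordinal lin).
pose qb : 'I_2 * 'I_2 * 'I_n := (i2, i2, Ordinal lin).
have qba : qb != qa by [].
have qab : qa != qb by [].
have cmQ : forall q : 'I_2 * 'I_2 * 'I_n, nat_of_ord q.2 = i ->
   [/\ @mcm R _ (g_sigma_algebraType (Pi Xf q)) _ _ (Mat g v1 v2 i),
       @mcm R _ (g_sigma_algebraType (Pi Xf q)) _ _ u1 &
       @mcm R _ (g_sigma_algebraType (Pi Xf q)) _ _ u2].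
  move=> q qi; split.
  - apply: (@mcm_Mat R _ (g_sigma_algebraType (Pi Xf q)) m1 m2 g v1 v2 i).
    + move=> k j s si B cB; have sn : (s < n)%N := ltn_trans si lin.
      apply: (otherQ q k j s sn) => //; apply/eqP => e.
      have : s = q.2 by rewrite -e.
      by rewrite qi => es; rewrite es ltnn in si.
    + move=> s a si B cB; apply: (pastQ q s); first by rewrite qi ltnW.
      exact: (pv1 s a (ltn_trans si lin) B cB).
    + move=> s a si B cB; apply: (pastQ q s); first by rewrite qi ltnW.
      exact: (pv2 s a (ltn_trans si lin) B cB).
  - apply: (@mcm_u1 R _ (g_sigma_algebraType (Pi Xf q))) => a B cB.
    by apply: (pastQ q i); [rewrite qi|exact: pv1].
  - apply: (@mcm_u2 R _ (g_sigma_algebraType (Pi Xf q))) => a B cB.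
    by apply: (pastQ q i); [rewrite qi|exact: pv2].
have cmO : forall q p, p != q -> cm (Xf p : g_sigma_algebraType (Pi Xf q) -> R[i]).
  by move=> q p pq B cB; apply: sub_gen_smallest; exact: Pi_gen.
pose b1 := fun r (f : 'I_r -> 'I_i) (h : 'I_r -> 'I_(m1 + m2)) k w =>
  beta (Mat g v1 v2 i w) f h (u1 w) k.
pose b2 := fun r (f : 'I_r -> 'I_i) (h : 'I_r -> 'I_(m1 + m2)) k w =>
  beta (Mat g v1 v2 i w) f h (u2 w) k.
pose Na := fun r (f : 'I_r -> 'I_i) (h : 'I_r -> 'I_(m1 + m2)) k =>
  [set w | Xf qa w * b1 r f h k w + Xf qb w * b2 r f h k w = 0 /\ b1 r f h k w != 0].
pose Nb := fun r (f : 'I_r -> 'I_i) (h : 'I_r -> 'I_(m1 + m2)) k =>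
  [set w | Xf qb w * b2 r f h k w + Xf qa w * b1 r f h k w = 0 /\ b2 r f h k w != 0].
have nN : forall r f h k, P.-negligible (Na r f h k `|` Nb r f h k).
  move=> r f h k; apply: negligibleU.
    have [cW cu1 cu2] := cmQ qa erefl.
    have [mN PN] := @null_lin R d T P (Pi Xf qa) (Xf qa) (b1 r f h k)
      (fun w => Xf qb w * b2 r f h k w) (Pi_meas cX) (cX qa)
      (fun A B hA hB => indep_gen cX mi hB hA) (atom i2 i1 i lin)
      (cm_beta f h k cW cu1) (cm_mul (cmO qa qb qba) (cm_beta f h k cW cu2)).
    by exists (Na r f h k); split.
  have [cW cu1 cu2] := cmQ qb erefl.
  have [mN PN] := @null_lin R d T P (Pi Xf qb) (Xf qb) (b2 r f h k)
    (fun w => Xf qa w * b1 r f h k w) (Pi_meas cX) (cX qb)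
    (fun A B hA hB => indep_gen cX mi hB hA) (atom i2 i2 i lin)
    (cm_beta f h k cW cu2) (cm_mul (cmO qb qa qab) (cm_beta f h k cW cu1)).
  by exists (Nb r f h k); split.
apply: (@negligibleS _ _ _ _ (\big[setU/set0]_(r <- iota 0 i.+1)
   \big[setU/set0]_(f <- enum {ffun 'I_r -> 'I_i})
   \big[setU/set0]_(h <- enum {ffun 'I_r -> 'I_(m1 + m2)})
   \big[setU/set0]_(k <- enum 'I_(m1 + m2)) (Na r f h k `|` Nb r f h k))); last first.
  apply: negl_bigU => r _; apply: negl_bigU => f _; apply: negl_bigU => h _.
  by apply: negl_bigU => k _; exact: nN.
move=> w [Aw Bw].
have sub1 : (Mat g v1 v2 i w <= Mat g v1 v2 i.+1 w)%MS.
  have -> : Mat g v1 v2 i w = rowsub (widen_ord (leqnSn i)) (Mat g v1 v2 i.+1 w).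
    by apply/matrixP => s c; rewrite !mxE.
  exact: rowsub_sub.
pose xr := row_mx (Xf qa w *: v1 i w) (Xf qb w *: v2 i w).
have sub2 : (xr <= Mat g v1 v2 i.+1 w)%MS.
  have -> : xr = row ord_max (Mat g v1 v2 i.+1 w) by apply/rowP => c; rewrite !mxE.
  exact: row_sub.
have xW : (xr <= Mat g v1 v2 i w)%MS.
  have := (mxrank_leqif_sup sub1).2; rewrite /= in Aw; rewrite Aw eqxx => /esym hh.
  exact: submx_trans sub2 hh.
have xE : xr = Xf qa w *: u1 w + Xf qb w *: u2 w.
  by rewrite /xr /u1 /u2 !scale_row_mx !scaler0 add_row_mx addr0 add0r.
have [f [h dt]] := minor_exists (Mat g v1 v2 i w).
have dt' : \det (mxsub (finfun f) (finfun h) (Mat g v1 v2 i w)) != 0 by rewrite mxsub_ffun.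
have lin0 : forall k, Xf qa w * b1 _ (finfun f) (finfun h) k w +
    Xf qb w * b2 _ (finfun f) (finfun h) k w = 0.
  by move=> k; have := (beta_spec xr dt').1 xW k; rewrite xE beta_lin.
have [k Nk] : exists k, (Na _ (finfun f) (finfun h) k `|` Nb _ (finfun f) (finfun h) k) w.
  have [u1W|u1W] := boolP (u1 w <= Mat g v1 v2 i w)%MS.
    have u2W : ~~ (u2 w <= Mat g v1 v2 i w)%MS by apply/negP => u2W; apply: Bw.
    have : ~ (forall k, b2 _ (finfun f) (finfun h) k w = 0).
      by move=> HH; move/negP: u2W; apply; apply/(beta_spec _ dt').
    move/existsNP => [k /eqP nk]; exists k; right; split => //.
    by rewrite addrC; exact: lin0.
  have : ~ (forall k, b1 _ (finfun f) (finfun h) k w = 0).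
    by move=> HH; move/negP: u1W; apply; apply/(beta_spec _ dt').
  by move/existsNP => [k /eqP nk]; exists k; left; split => //; exact: lin0.
apply: (@in_bigU _ _ _ _ (\rank (Mat g v1 v2 i w))).
  by rewrite mem_iota add0n ltnS rank_leq_row.
apply: (@in_bigU _ _ _ _ (finfun f)); first by rewrite mem_enum.
apply: (@in_bigU _ _ _ _ (finfun h)); first by rewrite mem_enum.
by apply: (@in_bigU _ _ _ _ k); first by rewrite mem_enum.
Qed.
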